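(* Let $n\ge 3$, $k\ge 1$ and $p\in\{0,1,2\}$. Then \[ \gamma_{\rm S}(C_n,C_{3k+p})\in \begin{cases} \{kn\}, & p=0,\\ \{kn,\;kn+1\}, & p=1,\\ \{kn+\lfloor n/2\rfloor,\; kn+\lfloor n/2\rfloor+1\}, & p=2. \end{cases} \] Moreover, if $n\equiv 0 \pmod 4$, then $\gamma_{\rm S}(C_n,C_{3k+1})=kn$ and $\gamma_{\rm S}(C_n,C_{3k+2})=kn+\lfloor n/2\rfloor$.
   Context: $C_m$ denotes the cycle on $m$ vertices; $\gamma$ denotes the domination number. For graphs $G,H$ and a function $f\colon V(G)\to V(H)$, the Sierpiński product $G\otimes_f H$ is the graph with vertex set $V(G)\times V(H)$ and edges of two types: (type 1) $(g,h)(g,h')$ for every $g\in V(G)$ and every edge $hh'\in E(H)$; (type 2) $(g,f(g'))(g',f(g))$ for every edge $gg'\in E(G)$. The Sierpiński domination number is $\gamma_{\rm S}(G,H)=\min_{f}\gamma(G\otimes_f H)$ over all functions $f\colon V(G)\to V(H)$. *)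

(* Defs.v *)
From mathcomp Require Import all_boot all_order.
Set Implicit Arguments. Unset Strict Implicit. Unset Printing Implicit Defensive.

(* The cycle C_m on vertex set 'I_m (meaningful for m >= 3):
   i ~ j iff j = i+1 mod m or i = j+1 mod m. *)
Definition cycle_rel (m : nat) : rel 'I_m :=
  fun i j => (j == (i.+1 %% m) :> nat) || (i == (j.+1 %% m) :> nat).

Definition dominating (T : finType) (e : rel T) (D : {set T}) : bool :=
  [forall v : T, (v \in D) || [exists u in D, e u v]].

(* Domination number: least cardinality of a dominating set
   (the whole vertex set dominates, so #|T| is a valid start value). *)
Definition domination_number (T : finType) (e : rel T) : nat :=
  \big[minn/#|T|]_(D : {set T} | dominating e D) #|D|.

Definition sierpinski_rel (G H : finType) (eG : rel G) (eH : rel H)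
    (f : G -> H) : rel (G * H) :=
  fun x y =>
    ((x.1 == y.1) && eH x.2 y.2)
    || [&& eG x.1 y.1, x.2 == f y.1 & y.2 == f x.1].

Definition sierpinski_domination (G H : finType) (eG : rel G) (eH : rel H)
    : nat :=
  \big[minn/#|{: G * H}|]_(f : {ffun G -> H})
     domination_number (sierpinski_rel eG eH f).

Definition gammaS_cycles (n m : nat) : nat :=
  sierpinski_domination (@cycle_rel n) (@cycle_rel m).

(* Main.v *)
Require Import Defs.
From mathcomp Require Import all_boot all_order.
From mathcomp Require Import zify.
Set Implicit Arguments. Unset Strict Implicit. Unset Printing Implicit Defensive.

Lemma val_ordS n (g : 'I_n) : nat_of_ord (ordS g) = if g.+1 < n then g.+1 else 0.
Proof.
rewrite /=; case: ltnP => h; first by rewrite modn_small.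
have -> : g.+1 = n by apply/eqP; rewrite eqn_leq h ltn_ord.
by rewrite modnn.
Qed.

Lemma val_ord_pred n (g : 'I_n) : nat_of_ord (ord_pred g) = if 0 < g then g.-1 else n.-1.
Proof.
rewrite /=; have gn := ltn_ord g; case: ifP => h.
  have -> : (g + n).-1 = g.-1 + n by lia.
  by rewrite modnDr modn_small //; lia.
have -> : nat_of_ord g = 0 by move/negbT: h; lia.
by rewrite add0n modn_small //; lia.
Qed.

Lemma cycle_rel_nbr m (x h : 'I_m) : cycle_rel x h -> h = ordS x \/ h = ord_pred x.
Proof.
rewrite /cycle_rel => /orP [/eqP e | /eqP e].
  by left; apply/val_inj.
right; have -> : x = ordS h by apply/val_inj.
by rewrite ordSK.
Qed.

Lemma cycle_rel_S m (x : 'I_m) : cycle_rel x (ordS x).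
Proof. by rewrite /cycle_rel eqxx. Qed.

Lemma cycle_rel_P m (x : 'I_m) : cycle_rel x (ord_pred x).
Proof.
have e : val x = (ord_pred x).+1 %% m by rewrite -{1}(ord_predK x).
by rewrite /cycle_rel e eqxx orbT.
Qed.

Definition nbh m (X : {set 'I_m}) : {set 'I_m} :=
  X :|: [set ordS x | x in X] :|: [set ord_pred x | x in X].

Definition cd (T : finType) (X : {set T}) : nat := #|X|.

Lemma cardU_le (T : finType) (A B : {set T}) : #|A :|: B| <= #|A| + #|B|.
Proof. by rewrite -cardsUI leq_addr. Qed.

Lemma card_nbh m (X : {set 'I_m}) : cd (nbh X) <= 3 * cd X.
Proof.
rewrite /cd.
rewrite /nbh mulSn mulSn mul1n.
apply: leq_trans (cardU_le _ _) _.
rewrite [X in _ <= X]addnC; apply: leq_add; last exact: leq_imset_card.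
apply: leq_trans (cardU_le _ _) _.
by apply: leq_add => //; exact: leq_imset_card.
Qed.

Definition cs m (b : bool) (x : 'I_m) : {set 'I_m} := [set h | b && (h == x)].

Lemma card_cs m b (x : 'I_m) : cd (cs b x) <= b.
Proof.
rewrite /cd.
case: b => /=.
  rewrite -(cards1 x); apply/subset_leq_card/subsetP=> h; by rewrite !inE.
rewrite leqn0; apply/eqP/eq_card0 => h; by rewrite !inE.
Qed.

Lemma count3 m (X A B : {set 'I_m}) :
  (forall h, h \in X \/ h \in A \/ h \in B) -> m <= cd X + cd A + cd B.
Proof.
rewrite /cd.
move=> H.
have : #|'I_m| <= #|X :|: A :|: B|.
  apply/subset_leq_card/subsetP=> h _.
  by case: (H h) => [hh|[hh|hh]]; rewrite !inE hh ?orbT.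
rewrite card_ord => h0.
have h1 := cardU_le (X :|: A) B.
have h2 := cardU_le X A.
lia.
Qed.

Definition sl n m (D : {set 'I_n * 'I_m}) (g : 'I_n) : {set 'I_m} :=
  [set h | (g, h) \in D].

Lemma card_sl n m (D : {set 'I_n * 'I_m}) : #|D| = \sum_g #|sl D g|.
Proof.
rewrite -sum1_card big_mkcond /=.
transitivity (\sum_(p : 'I_n * 'I_m) ((p.1, p.2) \in D : nat)).
  by apply: eq_bigr => -[a b] _ /=; case: ((a, b) \in D).
rewrite -(pair_bigA _ (fun g h => ((g, h) \in D : nat))).
apply: eq_bigr => g _.
rewrite -sum1_card [RHS]big_mkcond /=.
by apply: eq_bigr => h _; rewrite inE.
Qed.

Definition SR n m (f : 'I_n -> 'I_m) := sierpinski_rel (@cycle_rel n) (@cycle_rel m) f.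

Lemma cover n m (f : 'I_n -> 'I_m) D (dom : dominating (SR f) D) g h :
  h \in nbh (sl D g) \/
  h \in cs ((ord_pred g, f g) \in D) (f (ord_pred g)) \/
  h \in cs ((ordS g, f g) \in D) (f (ordS g)).
Proof.
move/forallP: dom => /(_ (g, h)) /orP [gh | /existsP [u /andP [uD]]].
  by left; rewrite /nbh !inE gh.
rewrite /SR /sierpinski_rel /= => /orP [/andP [/eqP e c] | /and3P [c /eqP e1 /eqP e2]].
  left; have hu : u.2 \in sl D g by rewrite inE -e -surjective_pairing.
  case: (cycle_rel_nbr c) => ->; rewrite /nbh !inE; apply/orP;
    [left; apply/orP; right | right]; apply/imsetP; by exists u.2.
case: (cycle_rel_nbr c) => eg.
  right; left; rewrite !inE.
  have e3 : u.1 = ord_pred g by rewrite eg ordSK.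
  by rewrite -e3 -e1 -surjective_pairing uD e2 /=.
right; right; rewrite !inE.
have e3 : u.1 = ordS g by rewrite eg ord_predK.
by rewrite -e3 -e1 -surjective_pairing uD e2 /=.
Qed.

Lemma L1 n m (f : 'I_n -> 'I_m) D (dom : dominating (SR f) D) g :
  m <= 3 * cd (sl D g) + 2.
Proof.
have := count3 (cover dom g).
have := card_nbh (sl D g).
have := card_cs ((ord_pred g, f g) \in D) (f (ord_pred g)).
have := card_cs ((ordS g, f g) \in D) (f (ordS g)).
case: (_ \in D); case: (_ \in D) => /=; lia.
Qed.

Lemma L2 n m k (f : 'I_n -> 'I_m) D (dom : dominating (SR f) D) g :
  m = 3 * k + 2 -> 2 * k + 1 <= cd (sl D g) + cd (sl D (ordS g)).
Proof.
move=> em.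
have a1 := L1 dom g; have a2 := L1 dom (ordS g).
rewrite leqNgt; apply/negP => hlt.
have Hs : (ordS g, f g) \in D.
  apply/negPn/negP => hn.
  have := count3 (cover dom g).
  have := card_nbh (sl D g).
  have := card_cs ((ord_pred g, f g) \in D) (f (ord_pred g)).
  have := card_cs ((ordS g, f g) \in D) (f (ordS g)).
  rewrite (negbTE hn) /=; case: (_ \in D) => /=; lia.
have C : forall h, h \in nbh (sl D (ordS g)) \/ h \in (set0 : {set 'I_m}) \/
     h \in cs ((ordS (ordS g), f (ordS g)) \in D) (f (ordS (ordS g))).
  move=> h; case: (cover dom (ordS g) h) => [H|[H|H]]; [by left | | by right; right].
  left; move: H; rewrite ordSK inE => /andP [_ /eqP ->].
  by rewrite /nbh !inE Hs.
have := count3 C.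
have := card_nbh (sl D (ordS g)).
have := card_cs ((ordS (ordS g), f (ordS g)) \in D) (f (ordS (ordS g))).
rewrite /cd cards0 -/(cd _) -/(cd _) -/(cd _); case: (_ \in D) => /=; lia.
Qed.

Lemma dn_lb (T : finType) (e : rel T) L :
  L <= #|T| -> (forall D, dominating e D -> L <= #|D|) -> L <= domination_number e.
Proof.
move=> h1 h2; rewrite /domination_number.
apply: (big_ind (fun x => L <= x)) => //.
by move=> x y hx hy; rewrite leq_min hx hy.
Qed.

Lemma gS_lb n m L : L <= n * m ->
  (forall (f : {ffun 'I_n -> 'I_m}) D, dominating (SR f) D -> L <= #|D|) ->
  L <= gammaS_cycles n m.
Proof.
move=> h1 h2; rewrite /gammaS_cycles /sierpinski_domination.
apply: (big_ind (fun x => L <= x)).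
- by rewrite card_prod !card_ord.
- by move=> x y hx hy; rewrite leq_min hx hy.
move=> f _; apply: dn_lb; first by rewrite card_prod !card_ord.
exact: h2.
Qed.

Lemma bigmin_le_seq (I : eqType) (r : seq I) (P : pred I) (F : I -> nat) x0 i :
  i \in r -> P i -> \big[minn/x0]_(j <- r | P j) F j <= F i.
Proof.
elim: r => //= a r IH; rewrite in_cons big_cons => /orP [/eqP <- Pi | ir Pi].
  by rewrite Pi geq_minl.
case: (P a); last exact: IH.
by apply: leq_trans (geq_minr _ _) (IH ir Pi).
Qed.

Lemma bigmin_le (I : finType) (P : pred I) (F : I -> nat) x0 i :
  P i -> \big[minn/x0]_(j | P j) F j <= F i.
Proof. by move=> Pi; apply: bigmin_le_seq => //; exact: mem_index_enum. Qed.

Lemma gS_ub n m (f : {ffun 'I_n -> 'I_m}) D :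
  dominating (SR f) D -> gammaS_cycles n m <= #|D|.
Proof.
move=> hD; rewrite /gammaS_cycles /sierpinski_domination.
apply: leq_trans (@bigmin_le _ xpredT _ _ f isT) _.
rewrite /domination_number.
exact: (@bigmin_le _ _ (fun D : {set _} => #|D|) _ D hD).
Qed.

Lemma LBa n m k : 3 * k <= m -> k * n <= gammaS_cycles n m.
Proof.
move=> hm; apply: gS_lb; first by nia.
move=> f D hD; rewrite card_sl.
have -> : k * n = \sum_(g < n) k by rewrite sum_nat_const card_ord mulnC.
apply: leq_sum => g _.
have := L1 hD g; rewrite /cd; lia.
Qed.

Lemma LBb n m k : m = 3 * k + 2 -> k * n + n./2 <= gammaS_cycles n m.
Proof.
move=> hm; apply: gS_lb; first by rewrite hm; lia.
move=> f D hD.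
have : n * (2 * k + 1) <= #|D| + #|D|.
  rewrite card_sl {2}(reindex_inj (@ordS_inj n)) -big_split /=.
  have -> : n * (2 * k + 1) = \sum_(g < n) (2 * k + 1) by rewrite sum_nat_const card_ord.
  apply: leq_sum => g _.
  exact: (L2 hD g hm).
lia.
Qed.

Definition mkD n m (S : 'I_n -> {set 'I_m}) : {set 'I_n * 'I_m} :=
  [set p | p.2 \in S p.1].

Lemma card_mkD n m (S : 'I_n -> {set 'I_m}) : #|mkD S| = \sum_g #|S g|.
Proof.
rewrite card_sl; apply: eq_bigr => g _.
by apply: eq_card => h; rewrite !inE.
Qed.

Lemma dom_suff n m (f : 'I_n -> 'I_m) (S : 'I_n -> {set 'I_m}) :
  (forall g h, (exists2 x, x \in S g & (x == h) || cycle_rel x h) \/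
     exists g', [/\ cycle_rel g' g, h = f g' & f g \in S g']) ->
  dominating (SR f) (mkD S).
Proof.
move=> H; apply/forallP => -[g h].
case: (H g h) => [[x xS /orP [/eqP <- | c]] | [g' [c e fS]]].
- by rewrite inE /= xS.
- apply/orP; right; apply/existsP; exists (g, x).
  by rewrite inE /= xS /SR /sierpinski_rel /= eqxx c.
- apply/orP; right; apply/existsP; exists (g', f g).
  by rewrite inE /= fS /SR /sierpinski_rel /= c eqxx e eqxx orbT.
Qed.

Lemma near_ok M (x h : 'I_M.+1) :
  (nat_of_ord x = h \/ x + 1 = h \/ h + 1 = x \/
   (nat_of_ord x = 0 /\ nat_of_ord h = M) \/ (nat_of_ord h = 0 /\ nat_of_ord x = M)) ->
  (x == h) || cycle_rel x h.
Proof.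
have xl := ltn_ord x; have hl := ltn_ord h.
rewrite /cycle_rel => -[e|[e|[e|[[e1 e2]|[e1 e2]]]]].
- by rewrite (_ : x = h) ?eqxx //; apply/val_inj.
- by rewrite -e addn1 modn_small ?eqxx ?orbT //; lia.
- by rewrite -e addn1 (@modn_small h.+1) ?eqxx ?orbT //; lia.
- by rewrite e1 e2 modnn eqxx ?orbT.
- by rewrite e1 e2 modnn eqxx ?orbT.
Qed.

Lemma img_mem M k (F : nat -> nat) (j : nat) a :
  j < k -> a = F j -> (inord a : 'I_M.+1) \in [set (inord (F (val i)) : 'I_M.+1) | i : 'I_k].
Proof. by move=> jk ->; apply/imsetP; exists (Ordinal jk). Qed.

Lemma img_card M k (F : nat -> nat) : #|[set (inord (F (val i)) : 'I_M.+1) | i : 'I_k]| <= k.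
Proof. by apply: leq_trans (leq_imset_card _ _) _; rewrite card_ord. Qed.

Lemma int_dom M (S : {set 'I_M.+1}) (h : 'I_M.+1) a :
  (inord a : 'I_M.+1) \in S -> a <= M ->
  (a = h \/ a + 1 = h \/ h + 1 = a \/ (a = 0 /\ nat_of_ord h = M) \/ (nat_of_ord h = 0 /\ a = M)) ->
  exists2 x, x \in S & (x == h) || cycle_rel x h.
Proof.
move=> aS aM H; exists (inord a) => //; apply: near_ok.
by rewrite inordK //; lia.
Qed.

Lemma sum_first n : \sum_(g < n) (nat_of_ord g == 0 : nat) <= 1.
Proof.
case: n => [|n]; first by rewrite big_ord0.
rewrite big_ord_recl /= big1 // => i _.
Qed.

Lemma sum_last n : \sum_(g < n) (g.+1 == n : nat) <= 1.
Proof.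
case: n => [|n]; first by rewrite big_ord0.
rewrite big_ord_recr /= eqxx big1 // => i _.
by rewrite eqSS (ltn_eqF (ltn_ord i)).
Qed.

Lemma sum_even n : \sum_(g < n) (g %% 2 == 0 : nat) = n.+1 %/ 2.
Proof.
elim: n => [|n IH]; first by rewrite big_ord0.
rewrite big_ord_recr /= IH.
case: (eqVneq (n %% 2) 0) => e /=; lia.
Qed.

Lemma sum_bound n (F : 'I_n -> nat) (G : 'I_n -> nat) :
  (forall g, F g <= G g) -> \sum_g F g <= \sum_g G g.
Proof. by move=> H; apply: leq_sum => g _. Qed.

Definition FA (j : nat) := 3 * j + 1.

Lemma ubA n k M : M.+1 = 3 * k -> gammaS_cycles n M.+1 <= k * n.
Proof.
move=> hM.
pose S := fun _ : 'I_n => [set (inord (FA (val i)) : 'I_M.+1) | i : 'I_k].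
pose f := [ffun _ : 'I_n => (ord0 : 'I_M.+1)].
apply: leq_trans (@gS_ub _ _ f (mkD S) _) _.
  apply: dom_suff => g h; left.
  have hl := ltn_ord h.
  have : h %% 3 = 0 \/ h %% 3 = 1 \/ h %% 3 = 2 by lia.
  case=> [e|[e|e]].
  - apply: (@int_dom _ _ _ h.+1); first (apply: (@img_mem _ _ _ (h %/ 3)); rewrite /FA); lia.
  - apply: (@int_dom _ _ _ h); first (apply: (@img_mem _ _ _ (h %/ 3)); rewrite /FA); lia.
  - apply: (@int_dom _ _ _ h.-1); first (apply: (@img_mem _ _ _ (h %/ 3)); rewrite /FA); lia.
rewrite card_mkD.
apply: leq_trans (sum_bound (G := fun _ => k) _) _; first by move=> g; exact: img_card.
by rewrite sum_nat_const card_ord mulnC.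
Qed.

Definition F0 (x : nat) := if 2 <= x %% 4 then 2 else 0.
Definition FF (j : nat) := 3 * j.
Definition FSA (j : nat) := 3 * j + 2.
Definition FSB k (j : nat) := if j.+1 == k then 0 else 3 * j + 4.

Lemma cycle_rel_pred n (g : 'I_n) : cycle_rel (ord_pred g) g.
Proof. by have := cycle_rel_S (ord_pred g); rewrite ord_predK. Qed.

Lemma F0_cases x : F0 x = 0 \/ F0 x = 2.
Proof. by rewrite /F0; case: ifP; [right|left]. Qed.


Definition SB_set M k (full0 : bool) n (g : 'I_n) : {set 'I_M.+1} :=
  if full0 && (nat_of_ord g == 0) then [set (inord (FF (val i)) : 'I_M.+1) | i : 'I_k.+1]
  else if F0 (ord_pred g) == 0 then [set (inord (FSA (val i)) : 'I_M.+1) | i : 'I_k]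
  else [set (inord (FSB k (val i)) : 'I_M.+1) | i : 'I_k].

Definition fB M n := [ffun g : 'I_n => (inord (F0 g) : 'I_M.+1)].

Lemma keyB n k M (full0 : bool) (g : 'I_n) : 3 <= n -> 1 <= k -> M = 3 * k ->
  (~~ full0 -> n %% 4 = 0) -> ~~ (full0 && (nat_of_ord g == 0)) ->
  fB M n g \in SB_set M k full0 (ord_pred g).
Proof.
move=> hn hk hM h4 hg.
have gl := ltn_ord g.
rewrite /SB_set /fB ffunE.
have e1 := val_ord_pred g.
have e2 := val_ord_pred (ord_pred g).
have : nat_of_ord g = 0 \/ nat_of_ord g = 1 \/ 2 <= g by lia.
case=> [g0|[g1|g2]].
- have f0 : full0 = false by move: hg; rewrite g0 andbT; apply: negbTE.
  have n4 := h4 (negbT f0).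
  rewrite f0 andFb e2 e1 g0 /=.
  have -> : 0 < n.-1 by lia.
  have -> : F0 n.-1.-1 == 0 = false by rewrite /F0; case: leqP => //; lia.
  rewrite (_ : F0 0 = 0) //.
  apply: (@img_mem _ _ _ k.-1); first lia.
  by rewrite /FSB (_ : k.-1.+1 == k) //; apply/eqP; lia.
- rewrite e2 e1 g1 (_ : F0 1 = 0) //.
  case: full0 h4 {hg} => [_|h4]; rewrite ?andTb ?andFb.
    by apply: (@img_mem _ _ _ 0).
  rewrite /=.
  have n4 := h4 isT.
  have -> : F0 n.-1 == 0 = false by rewrite /F0; case: leqP => //; lia.
  apply: (@img_mem _ _ _ k.-1); first lia.
  by rewrite /FSB (_ : k.-1.+1 == k) //; apply/eqP; lia.
- rewrite e2 e1.
  have -> : 0 < g by lia.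
  have -> : (g.-1 == 0) = false by apply/negbTE; lia.
  have -> : 0 < g.-1 by lia.
  rewrite andbF.
  case: (F0_cases g.-1.-1) => e3; rewrite e3 ?eqxx /=.
    have -> : F0 g = 2 by move: e3; rewrite /F0; case: (leqP 2 (g %% 4)); case: (leqP 2 (g.-2 %% 4)); lia.
    by apply: (@img_mem _ _ _ 0) => //; lia.
  have -> : F0 g = 0 by move: e3; rewrite /F0; case: (leqP 2 (g %% 4)); case: (leqP 2 (g.-2 %% 4)); lia.
  apply: (@img_mem _ _ _ k.-1); first lia.
  by rewrite /FSB (_ : k.-1.+1 == k) //; apply/eqP; lia.
Qed.

Lemma ubB n k M (full0 : bool) : 3 <= n -> 1 <= k -> M = 3 * k ->
  (~~ full0 -> n %% 4 = 0) -> gammaS_cycles n M.+1 <= k * n + full0.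
Proof.
move=> hn hk hM h4.
apply: leq_trans (@gS_ub _ _ (fB M n) (mkD (@SB_set M k full0 n)) _) _.
  apply: dom_suff => g h.
  have hl := ltn_ord h.
  case hF : (full0 && (nat_of_ord g == 0)).
    left; rewrite /SB_set hF.
    have : h %% 3 = 0 \/ h %% 3 = 1 \/ h %% 3 = 2 by lia.
    case=> [e|[e|e]].
    - apply: (@int_dom _ _ _ h); first (apply: (@img_mem _ _ _ (h %/ 3)); rewrite /FF); lia.
    - apply: (@int_dom _ _ _ h.-1); first (apply: (@img_mem _ _ _ (h %/ 3)); rewrite /FF); lia.
    - apply: (@int_dom _ _ _ h.+1); first (apply: (@img_mem _ _ _ (h %/ 3).+1); rewrite /FF); lia.
  have ext : nat_of_ord h = F0 (ord_pred g) ->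
      exists g', [/\ cycle_rel g' g, h = fB M n g' & fB M n g \in SB_set M k full0 g'].
    move=> eh; exists (ord_pred g); split.
    - exact: cycle_rel_pred.
    - apply/val_inj; rewrite /fB ffunE.
      change (nat_of_ord h = nat_of_ord (inord (F0 (ord_pred g)) : 'I_M.+1)).
      rewrite inordK -?eh //; lia.
    - by apply: keyB => //; rewrite hF.
  case: (F0_cases (ord_pred g)) => eF.
    case: (eqVneq (nat_of_ord h) 0) => h0; first by right; apply: ext; rewrite eF.
    left; rewrite /SB_set hF eF eqxx.
    have : h %% 3 = 0 \/ h %% 3 = 1 \/ h %% 3 = 2 by lia.
    case=> [e|[e|e]].
    - apply: (@int_dom _ _ _ h.-1); first (apply: (@img_mem _ _ _ (h %/ 3).-1); rewrite /FSA); lia.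
    - apply: (@int_dom _ _ _ h.+1); first (apply: (@img_mem _ _ _ (h %/ 3)); rewrite /FSA); lia.
    - apply: (@int_dom _ _ _ h); first (apply: (@img_mem _ _ _ (h %/ 3)); rewrite /FSA); lia.
  case: (eqVneq (nat_of_ord h) 2) => h2; first by right; apply: ext; rewrite eF.
  left; rewrite /SB_set hF eF /=.
  have : nat_of_ord h = 0 \/ nat_of_ord h = 1 \/ nat_of_ord h = M \/ (3 <= h < M /\ h %% 3 = 0) \/
        (3 <= h < M /\ h %% 3 = 1) \/ (3 <= h < M /\ h %% 3 = 2) by lia.
  have Hk1 : FSB k k.-1 = 0 by rewrite /FSB (_ : k.-1.+1 == k) //; apply/eqP; lia.
  case=> [e|[e|[e|[[e1 e]|[[e1 e]|[e1 e]]]]]].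
  - apply: (@int_dom _ _ _ 0); first (apply: (@img_mem _ _ _ k.-1)); rewrite ?Hk1; lia.
  - apply: (@int_dom _ _ _ 0); first (apply: (@img_mem _ _ _ k.-1)); rewrite ?Hk1; lia.
  - apply: (@int_dom _ _ _ 0); first (apply: (@img_mem _ _ _ k.-1)); rewrite ?Hk1; lia.
  - apply: (@int_dom _ _ _ h.+1); first (apply: (@img_mem _ _ _ (h %/ 3).-1));
      rewrite /FSB; try (case: eqP); lia.
  - apply: (@int_dom _ _ _ h); first (apply: (@img_mem _ _ _ (h %/ 3).-1));
      rewrite /FSB; try (case: eqP); lia.
  - apply: (@int_dom _ _ _ h.-1); first (apply: (@img_mem _ _ _ (h %/ 3).-1));
      rewrite /FSB; try (case: eqP); lia.
rewrite card_mkD.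
apply: leq_trans (sum_bound (G := fun g : 'I_n => k + (full0 && (nat_of_ord g == 0))) _) _.
  move=> g /=; rewrite /SB_set; case: ifP => hF.
    by apply: leq_trans (img_card M k.+1 FF) _; rewrite /= addn1.
  rewrite /= addn0; case: ifP => _; [exact: (img_card M k FSA) | exact: (img_card M k (FSB k))].
rewrite big_split /= sum_nat_const card_ord mulnC leq_add2l.
case: full0 {h4} => /=; first exact: sum_first.
by rewrite big1.
Qed.

Definition F1 (x : nat) := if x %% 2 == 1 then 0 else (x %/ 2) %% 2.
Definition FD (j : nat) := 3 * j + 3.
Definition defc n (x : nat) := (x %% 2 == 1) && ((x.+1 < n) || (n %% 4 == 0)).

Definition SC_set M k n (g : 'I_n) : {set 'I_M.+1} :=
  if defc n g then [set (inord (FD (val i)) : 'I_M.+1) | i : 'I_k]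
  else [set (inord (FF (val i)) : 'I_M.+1) | i : 'I_k.+1].

Definition fC M n := [ffun g : 'I_n => (inord (F1 g) : 'I_M.+1)].

Lemma cycle_rel_succ n (g : 'I_n) : cycle_rel (ordS g) g.
Proof. by rewrite /cycle_rel eqxx orbT. Qed.

Lemma F1_le x : F1 x <= 1.
Proof. rewrite /F1; case: eqP => _; lia. Qed.

Lemma ubC n k M : 3 <= n -> 1 <= k -> M = 3 * k + 1 ->
  gammaS_cycles n M.+1 <= k * n + n.+1 %/ 2 + (n %% 4 == 2).
Proof.
move=> hn hk hM.
apply: leq_trans (@gS_ub _ _ (fC M n) (mkD (@SC_set M k n)) _) _.
  apply: dom_suff => g h.
  have hl := ltn_ord h; have gl := ltn_ord g.
  case hD : (defc n g); last first.
    left; rewrite /SC_set hD.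
    have : h %% 3 = 0 \/ h %% 3 = 1 \/ h %% 3 = 2 by lia.
    case=> [e|[e|e]].
    - apply: (@int_dom _ _ _ h); first (apply: (@img_mem _ _ _ (h %/ 3)); rewrite /FF); lia.
    - apply: (@int_dom _ _ _ h.-1); first (apply: (@img_mem _ _ _ (h %/ 3)); rewrite /FF); lia.
    - apply: (@int_dom _ _ _ h.+1); first (apply: (@img_mem _ _ _ (h %/ 3).+1); rewrite /FF); lia.
  have hD' := hD; move: hD'; rewrite /defc => /andP [/eqP godd hw].
  have ext : forall g', cycle_rel g' g -> nat_of_ord h = F1 g' -> g' %% 2 == 0 ->
      exists g', [/\ cycle_rel g' g, h = fC M n g' & fC M n g \in SC_set M k g'].
    move=> g' c eh ev; exists g'; split => //.
    - apply/val_inj; rewrite /fC ffunE.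
      change (nat_of_ord h = nat_of_ord (inord (F1 g') : 'I_M.+1)).
      rewrite inordK -?eh //; lia.
    - rewrite /SC_set /defc (eqP ev) /= ffunE /F1 godd eqxx.
      by apply: (@img_mem _ _ _ 0).
  have ep := val_ord_pred g; have es := val_ordS g.
  have : 2 <= h \/ nat_of_ord h = F1 (ord_pred g) \/ nat_of_ord h = F1 (ordS g).
    rewrite ep es.
    have -> : 0 < g by lia.
    move: hw; case: ltnP => hlt /= hw.
      rewrite /F1; case: eqP => e1; case: eqP => e2; lia.
    rewrite /F1; case: eqP => e1; case: eqP => e2; lia.
  case=> [h2|[eh|eh]].
  - left; rewrite /SC_set hD.
    have : h %% 3 = 0 \/ h %% 3 = 1 \/ h %% 3 = 2 by lia.
    case=> [e|[e|e]].
    - apply: (@int_dom _ _ _ h); first (apply: (@img_mem _ _ _ (h %/ 3).-1); rewrite /FD); lia.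
    - apply: (@int_dom _ _ _ h.-1); first (apply: (@img_mem _ _ _ (h %/ 3).-1); rewrite /FD); lia.
    - apply: (@int_dom _ _ _ h.+1); first (apply: (@img_mem _ _ _ (h %/ 3)); rewrite /FD); lia.
  - have g0 : 0 < g by lia.
    right; apply: ext; [exact: cycle_rel_pred | exact: eh | rewrite ep g0; lia].
  - right; apply: ext; [exact: cycle_rel_succ | exact: eh | rewrite es; case: ltnP => _; lia].
rewrite card_mkD.
apply: leq_trans (sum_bound (G := fun g : 'I_n => k + (g %% 2 == 0 : nat) + ((g.+1 == n) && (n %% 4 == 2) : nat)) _) _.
  move=> g /=; rewrite /SC_set; case: ifP => hD.
    by apply: leq_trans (img_card M k FD) _; lia.
  apply: leq_trans (img_card M k.+1 FF) _.
  move: hD; have gl := ltn_ord g; rewrite /defc.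
  case: (g %% 2 =P 1); case: ltnP; case: (n %% 4 =P 0); case: (g %% 2 =P 0);
    case: (g.+1 =P n); case: (n %% 4 =P 2) => /=; lia.
rewrite !big_split /= sum_nat_const card_ord sum_even mulnC.
rewrite leq_add2l.
case: (n %% 4 == 2) => /=.
  by apply: leq_trans (sum_last n); apply: leq_sum => g _; rewrite andbT.
by rewrite big1 // => g _; rewrite andbF.
Qed.

Theorem theorem3p1 (n k : nat) (hn : 3 <= n) (hk : 1 <= k) :
  [/\ gammaS_cycles n (3 * k) = k * n,
      gammaS_cycles n (3 * k + 1) \in [:: k * n; k * n + 1],
      gammaS_cycles n (3 * k + 2) \in [:: k * n + n./2; k * n + n./2 + 1]
    & (n %% 4 = 0 ->
        gammaS_cycles n (3 * k + 1) = k * n /\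
        gammaS_cycles n (3 * k + 2) = k * n + n./2)].
Proof.
have l0 : k * n <= gammaS_cycles n (3 * k) by apply: LBa.
have u0 : gammaS_cycles n (3 * k) <= k * n.
  have e : 3 * k = (3 * k).-1.+1 by lia.
  rewrite e; apply: ubA; lia.
have l1 : k * n <= gammaS_cycles n (3 * k + 1) by apply: LBa; lia.
have u1 : forall full0 : bool, (~~ full0 -> n %% 4 = 0) ->
    gammaS_cycles n (3 * k + 1) <= k * n + full0.
  by move=> full0 h4; rewrite addn1; apply: ubB.
have l2 : k * n + n./2 <= gammaS_cycles n (3 * k + 2) by apply: LBb.
have u2 : gammaS_cycles n (3 * k + 2) <= k * n + n.+1 %/ 2 + (n %% 4 == 2).
  rewrite (_ : 3 * k + 2 = (3 * k + 1).+1); last by lia.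
  by apply: ubC.
split.
- by apply/eqP; rewrite eqn_leq u0 l0.
- have := u1 true (fun h => ltac:(done)).
  move=> u; have : gammaS_cycles n (3 * k + 1) = k * n \/
                   gammaS_cycles n (3 * k + 1) = k * n + 1 by move: u => /=; lia.
  by case=> ->; rewrite !inE eqxx ?orbT.
- have : gammaS_cycles n (3 * k + 2) = k * n + n./2 \/
         gammaS_cycles n (3 * k + 2) = k * n + n./2 + 1.
    move: u2; case: (n %% 4 =P 2) => /= e; lia.
  by case=> ->; rewrite !inE eqxx ?orbT.
- move=> h4; split.
    have := u1 false (fun _ => h4); rewrite addn0 => u.
    by apply/eqP; rewrite eqn_leq u l1.
  move: u2; rewrite h4 /= addn0 => u.
  apply/eqP; rewrite eqn_leq l2 andbT.
  apply: leq_trans u _; lia.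
Qed.
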